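(* If a topological space $X$ is $\alpha_1$, then for each $x\in X$, player ONE does not have a winning strategy in the game $\alpha^{\mathrm{game}}(X,x)$.
   Context: Convention: a ''sequence'' is a countably infinite set; a countably infinite set $A$ converges to $x$ if $x\notin A$ and every neighborhood of $x$ contains all but finitely many elements of $A$. $X$ is $\alpha_1$ if for each $x\in X$ and all pairwise disjoint sequences $S_1,S_2,\dots\subseteq X$ each converging to $x$, there is a sequence $S\subseteq\bigcup_nS_n$ converging to $x$ such that $S_n\setminus S$ is finite for all $n$. The game $\alpha^{\mathrm{game}}(X,x)$: in the $n$-th inning ONE chooses a sequence $S_n\subseteq X$ converging to $x$, TWO responds with an infinite $T_n\subseteq S_n$; TWO wins if $\bigcup_nT_n$ converges to $x$, otherwise ONE wins. *)

(* Defs.v *)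
From HB Require Import structures.
From mathcomp Require Import all_boot all_order.
From mathcomp Require Import boolp classical_sets cardinality topology.
Set Implicit Arguments. Unset Strict Implicit. Unset Printing Implicit Defensive.
Local Open Scope classical_set_scope.

Definition is_sequence {T : Type} (A : set T) : Prop :=
  countable A /\ infinite_set A.

Definition converges_to {T : topologicalType} (A : set T) (x : T) : Prop :=
  is_sequence A /\ ~ A x /\
  (forall U : set T, nbhs x U -> finite_set (A `\` U)).

Definition alpha1 (T : topologicalType) : Prop :=
  forall (x : T) (S : nat -> set T),
    (forall n, converges_to (S n) x) ->
    (forall n m, n <> m -> S n `&` S m = set0) ->
    exists S0 : set T,
      S0 `<=` \bigcup_n S n /\ converges_to S0 x /\
      (forall n, finite_set (S n `\` S0)).

(* The game alpha^game(X,x).  A strategy for ONE maps the finite history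
   (T_1,...,T_n) of TWO's previous moves to ONE's next move S_{n+1}, which
   must be a sequence converging to x. *)
Definition ONE_strategy {T : topologicalType} (x : T)
    (sigma : seq (set T) -> set T) : Prop :=
  forall h, converges_to (sigma h) x.

Definition history {T : Type} (t : nat -> set T) (n : nat) : seq (set T) :=
  map t (iota 0 n).

Definition legal_play {T : topologicalType} (sigma : seq (set T) -> set T)
    (t : nat -> set T) : Prop :=
  forall n, infinite_set (t n) /\ t n `<=` sigma (history t n).

Definition ONE_winning {T : topologicalType} (x : T)
    (sigma : seq (set T) -> set T) : Prop :=
  ONE_strategy x sigma /\
  forall t, legal_play sigma t -> ~ converges_to (\bigcup_n t n) x.

(* Main.v *)
Require Import Defs.
From mathcomp Require Import all_boot all_order.
From mathcomp Require Import boolp classical_sets cardinality topology.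
Set Implicit Arguments. Unset Strict Implicit. Unset Printing Implicit Defensive.
Local Open Scope classical_set_scope.

Section Aux.
Variable T : topologicalType.
Variable x : T.

Lemma conv_sub (A B : set T) : B `<=` A -> converges_to A x ->
  infinite_set B -> converges_to B x.
Proof.
move=> BA [[cA iA] [nA fA]] iB; split; first split => //.
  exact: sub_countable (subset_card_le BA) cA.
split; first by move=> /BA.
move=> U /fA; apply: sub_finite_set => y [/BA ? ?]; by split.
Qed.

Lemma countableU (A B : set T) : countable A -> countable B ->
  countable (A `|` B).
Proof.
move=> cA cB.
have -> : A `|` B = \bigcup_(b in [set: bool]) (if b then A else B).
  apply/seteqP; split => y.
    by case=> Hy; [exists true | exists false].
  by case=> -[] _ Hy; [left|right].
by apply: bigcup_countable => // -[].
Qed.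

Lemma conv_U (A B : set T) : converges_to A x -> converges_to B x ->
  converges_to (A `|` B) x.
Proof.
move=> [[cA iA] [nA fA]] [[cB iB] [nB fB]]; split; first split.
- exact: countableU.
- by move=> /(sub_finite_set (@subsetUl _ A B)).
split; first by case.
move=> U hU; apply: (@sub_finite_set _ _ ((A `\` U) `|` (B `\` U))).
  by move=> y [[?|?] ?]; [left|right].
by rewrite finite_setU; split; [apply: fA|apply: fB].
Qed.


Fixpoint Dseq (A : nat -> set T) n : set T :=
  match n with 0 => A 0 | k.+1 => Dseq A k `|` A k.+1 end.

Lemma A_sub_D A n : A n `<=` Dseq A n.
Proof. by case: n => [|n] //= y; right. Qed.

Lemma D_mono A m n : (m <= n)%N -> Dseq A m `<=` Dseq A n.
Proof.
elim: n => [|n IH]; first by rewrite leqn0 => /eqP ->.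
rewrite leq_eqVlt => /orP[/eqP -> //|]; rewrite ltnS => /IH H y /H Hy.
by left.
Qed.

Lemma D_conv A : (forall n, converges_to (A n) x) -> forall n,
  converges_to (Dseq A n) x.
Proof. move=> cA; elim=> [|n IH] //=; exact: conv_U. Qed.

Fixpoint gfix (mf : nat -> nat) k : nat :=
  match k with 0 => 0 | k'.+1 => (mf (gfix mf k') + gfix mf k').+1 end.

Definition Cset A mf k : set T :=
  match k with 0 => Dseq A 0
  | k'.+1 => Dseq A (gfix mf k) `\` Dseq A (gfix mf k') end.

Lemma gfix_mono mf m n : (m <= n)%N -> (gfix mf m <= gfix mf n)%N.
Proof.
elim: n => [|n IH]; first by rewrite leqn0 => /eqP ->.
rewrite leq_eqVlt => /orP[/eqP -> //|]; rewrite ltnS => /IH H.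
by apply: (leq_trans H) => /=; apply: leqW; rewrite leq_addl.
Qed.

Lemma gfix_ge mf n : (n <= gfix mf n)%N.
Proof. by elim: n => [|n IH] //=; rewrite ltnS (leq_trans IH) ?leq_addl. Qed.

Lemma C_sub A mf k : Cset A mf k `<=` Dseq A (gfix mf k).
Proof. by case: k => [|k] //= y []. Qed.

Lemma C_disj A mf n m : (n < m)%N -> Cset A mf n `&` Cset A mf m = set0.
Proof.
case: m => [//|m]; rewrite ltnS => nm; apply/seteqP; split => // y [].
move=> /C_sub /(D_mono (A:=A) (gfix_mono mf nm)) Hy [] _; by [].
Qed.

Lemma alpha1_gen : alpha1 T -> forall A : nat -> set T,
  (forall n, converges_to (A n) x) ->
  exists S, converges_to S x /\ forall n, finite_set (A n `\` S).
Proof.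
move=> a1 A cA.
have [P|nP] := pselect (forall N, exists m, infinite_set (A m `\` Dseq A N)).
  have [mf Hmf] := choice P.
  have cC : forall k, converges_to (Cset A mf k) x.
    move=> k; apply: (conv_sub (@C_sub A mf k) (D_conv cA _)).
    case: k => [|k] /=; first by case: (cA 0) => [[]].
    move=> fin; apply: (Hmf (gfix mf k)); apply: sub_finite_set fin.
    move=> y [Hy nHy]; split => //.
    apply: (D_mono (A:=A) (n:=gfix mf k.+1) _ (A_sub_D Hy)); by rewrite /= ltnW // ltnS leq_addr.
  have disj : forall n m, n <> m -> Cset A mf n `&` Cset A mf m = set0.
    move=> n m /eqP; rewrite neq_ltn => /orP[] H; first exact: C_disj.
    by rewrite setIC; apply: C_disj.
  have [S0 [_ [cS0 fS0]]] := a1 x (Cset A mf) cC disj.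
  exists S0; split => // n.
  have fD : forall k, finite_set (Dseq A (gfix mf k) `\` S0).
    elim=> [|k IH]; first exact: (fS0 0).
    apply: (@sub_finite_set _ _ ((Dseq A (gfix mf k) `\` S0) `|` (Cset A mf k.+1 `\` S0))).
      move=> y [Hy nS]; have [Hk|Hk] := pselect (Dseq A (gfix mf k) y).
        by left.
      by right.
    by rewrite finite_setU; split => //; apply: fS0.
  apply: sub_finite_set (fD n) => y [Hy nS]; split => //.
  exact: (D_mono (A:=A) (gfix_ge mf n) (A_sub_D Hy)).
move: nP => /existsNP [N /forallNP HN].
exists (Dseq A N); split; first exact: D_conv.
move=> m; apply: contrapT => Hm; exact: (HN m).
Qed.

End Aux.

Section Game.
Variable T : topologicalType.
Variable x : T.

Lemma inj_exists (A : set T) : exists g : T -> nat,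
  countable A -> {in A &, injective g}.
Proof.
have [cA|ncA] := boolP (countable A); last by exists (fun _ => 0%N).
by have /countable_injP [g Hg] := cA; exists g.
Qed.

Definition Gf : set T -> T -> nat := projT1 (choice inj_exists).
Lemma GfP A : countable A -> {in A &, injective (Gf A)}.
Proof. exact: (projT2 (choice inj_exists)). Qed.

Definition tail (A : set T) (j : nat) : set T :=
  [set y | A y /\ (j <= Gf A y)%N].

Lemma tail_sub A j : tail A j `<=` A.
Proof. by move=> y []. Qed.

Lemma tail_inf A j : converges_to A x -> infinite_set (tail A j).
Proof.
move=> [[cA iA] _] ft; apply: iA.
have fA' : finite_set [set y | A y /\ (Gf A y < j)%N].
  apply: (@card_le_finite _ _ _ `I_j) => //.
  apply/pcard_leP/injfunPex; exists (Gf A).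
    by move=> y [_ Hy].
  move=> y z /set_mem [Hy _] /set_mem [Hz _]; apply: (GfP cA); exact: mem_set.
apply: (@sub_finite_set _ _ (tail A j `|` [set y | A y /\ (Gf A y < j)%N])).
  move=> y Hy; case: (leqP j (Gf A y)) => H; [left|right]; by split.
by rewrite finite_setU.
Qed.

Lemma tail_in A S : finite_set (A `\` S) -> exists j, tail A j `<=` S.
Proof.
move=> /(finite_image (Gf A)) /finite_seqP [s Hs].
exists (\max_(k <- s) k).+1 => y [Hy Hj]; apply: contrapT => nS.
have : [set` s] (Gf A y) by rewrite -Hs; exists y.
move=> /= /(@leq_bigmax_seq _ s xpredT id _) => /(_ isT) H.
by move: (leq_ltn_trans H Hj); rewrite ltnn.
Qed.

End Game.

Fixpoint hsq {T : Type} (step : seq (set T) -> set T) n : seq (set T) :=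
  match n with 0 => [::] | k.+1 => rcons (hsq step k) (step (hsq step k)) end.

Lemma history_hsq {T : Type} (step : seq (set T) -> set T) n :
  history (fun k => step (hsq step k)) n = hsq step n.
Proof.
elim: n => [//|n IH].
rewrite /history -addn1 iotaD map_cat /= cats1 add0n addn1 /=.
by move: IH; rewrite /history => ->.
Qed.

Theorem proposition2p12 (X : topologicalType) :
  alpha1 X -> forall x : X, ~ exists sigma, ONE_winning x sigma.
Proof.
move=> a1 x [sigma [strat win]].
pose H (js : seq nat) : seq (set X) :=
  foldl (fun hs j => rcons hs (tail (sigma hs) j)) [::] js.
pose A n := sigma (H (odflt [::] (unpickle n))).
have [S [cS fS]] := alpha1_gen a1 (A := A) (fun n => strat _).
have fH : forall js, finite_set (sigma (H js) `\` S).
  move=> js; have := fS (pickle js); by rewrite /A pickleK.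
have /choice [jf Hjf] : forall hs : seq (set X), exists j,
    finite_set (sigma hs `\` S) -> tail (sigma hs) j `<=` S.
  move=> hs; have [fin|nfin] := pselect (finite_set (sigma hs `\` S)).
    by have [j Hj] := tail_in fin; exists j.
  by exists 0%N.
pose step hs := tail (sigma hs) (jf hs).
pose t k := step (hsq step k).
have inH : forall n, exists js, hsq step n = H js.
  elim=> [|n [js IH]]; first by exists [::].
  by exists (rcons js (jf (H js))); rewrite /H foldl_rcons -/(H js) /= IH.
have tS : forall n, t n `<=` S.
  move=> n; have [js E] := inH n; rewrite /t /step E.
  by apply: Hjf; apply: fH.
have legal : legal_play sigma t.
  move=> n; rewrite /t history_hsq; split; last exact: tail_sub.
  exact: tail_inf.
apply: (win t legal).
apply: (conv_sub _ cS).
  by move=> y [n _ Hy]; apply: (tS n).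
move=> fin; apply: (tail_inf (j := jf (hsq step 0)) (strat (hsq step 0))).
by apply: sub_finite_set fin => y Hy; exists 0%N.
Qed.
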